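(* Let $\mathcal I=\mathbb R^d$, let $\mathcal G$ be a compact Abelian group with normalized Haar measure $dg$ acting on $\mathcal I$ by a unitary representation, and let $\mathcal G_0\subset\mathcal G$ be measurable with $V=\int_{\mathcal G_0}dg>0$. For $I\in\mathcal I$ and $\bar g\in\mathcal G$ let $Z_{I,\bar g}:\bar g\mathcal G_0\to\mathcal I$, $Z_{I,\bar g}(g)=gI$, and let $\rho_{I,\bar g}(A)=\frac1V\int_{Z_{I,\bar g}^{-1}(A)}dg$ for measurable $A\subset\mathcal I$. Define $\bar P(I):\mathcal G\to\mathcal P(\mathcal I)$ by $\bar P(I)(g)=\rho_{I,g}$, and let $\mathcal G$ act on such maps by $(\tilde g\bar P(I))(g)=\bar P(I)(\tilde gg)$. Then for all $I,I'\in\mathcal I$: if $I\sim I'$, there exists $\tilde g\in\mathcal G$ such that $\bar P(I')=\tilde g\bar P(I)$. Equivalently, if $I'=\tilde gI$ then $\bar P(I')(g)=\bar P(I)(g\tilde g)$ for all $g\in\mathcal G$ (i.e. $\bar P$ is covariant).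
   Context: $\bar g\mathcal G_0=\{\bar g g': g'\in\mathcal G_0\}$. $\mathcal P(\mathcal I)$ is the set of Borel probability measures on $\mathcal I$. $I\sim I'$ means there exists $g\in\mathcal G$ with $gI=I'$. *)

(* Defs.v *)
From HB Require Import structures.
From mathcomp Require Import all_boot all_order all_algebra.
From mathcomp Require Import all_classical all_reals all_analysis.
Set Implicit Arguments. Unset Strict Implicit. Unset Printing Implicit Defensive.
Import Order.TTheory GRing.Theory Num.Theory.
Import numFieldNormedType.Exports.
Local Open Scope classical_set_scope.
Local Open Scope ring_scope.

Definition borelT (T : ptopologicalType) := g_sigma_algebraType (@open T).

(* A topological abelian group viewed as a pointed topological space
   (base point 0), so that its Borel sigma-algebra can be formed. *)
Definition zpt (T : topologicalZmodType) : Type := T.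
HB.instance Definition _ (T : topologicalZmodType) :=
  TopologicalZmodule.on (zpt T).
HB.instance Definition _ (T : topologicalZmodType) :=
  isPointed.Build (zpt T) 0%R.

Section Covariance.
Variables (R : realType) (d : nat) (G : topologicalZmodType).
Variables (haar : probability (borelT (zpt G)) R) (rep : G -> 'M[R]_d)
          (G0 : set G).

(* \bar g G0 (group written additively, G abelian) *)
Definition transl (gbar : G) (S : set G) : set G := (fun g' => gbar + g') @` S.

Definition gact (g : G) (I : 'cV[R]_d) : 'cV[R]_d := rep g *m I.

Definition Zpre (I : 'cV[R]_d) (gbar : G) (A : set 'cV[R]_d) : set G :=
  [set g | transl gbar G0 g /\ A (gact g I)].

Definition Vol : R := fine (haar G0).

Definition rho (I : 'cV[R]_d) (gbar : G) (A : set 'cV[R]_d) : R :=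
  fine (haar (Zpre I gbar A)) / Vol.

Definition Pbar (I : 'cV[R]_d) : G -> set 'cV[R]_d -> R := fun g => rho I g.

Definition Pact (gt : G) (P : G -> set 'cV[R]_d -> R) : G -> set 'cV[R]_d -> R :=
  fun g => P (gt + g).

Definition orbit_rel (I I' : 'cV[R]_d) : Prop := exists g : G, gact g I = I'.
End Covariance.

(* Main.v *)
Require Import Defs.
From HB Require Import structures.
From mathcomp Require Import all_boot all_order all_algebra.
From mathcomp Require Import all_classical all_reals all_analysis.
Import Order.TTheory GRing.Theory Num.Theory.
Import numFieldNormedType.Exports.
Local Open Scope classical_set_scope.
Local Open Scope ring_scope.

Lemma cont_borel_measurable (T U : ptopologicalType) (f : T -> U) :
  continuous f -> forall A : set U, measurable (A : set (borelT U)) ->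
  measurable ((f @^-1` A) : set (borelT T)).
Proof.
move=> cf A mA.
have := @measurability _ _ (borelT T) (borelT U) setT f (@open U) erefl.
move=> /(_ _ measurableT A mA); rewrite setTI; apply.
move=> _ [B oB <-]; rewrite setTI; apply: sub_sigma_algebra.
by apply: open_comp => // x _; exact: cf.
Qed.

Lemma subc_continuous (G : topologicalZmodType) (g : G) :
  continuous (fun h : G => h - g).
Proof.
move=> x.
apply: (@continuous_comp _ _ _ (fun h : G => (h, g)) (fun p : G * G => p.1 - p.2)).
  by apply: cvg_pair => //; exact: cvg_cst.
exact: sub_continuous.
Qed.
Theorem theorem8 (R : realType) (d : nat) (G : topologicalZmodType)
  (G_compact : compact [set: G])
  (haar : probability (borelT (zpt G)) R)
  (haar_invariant : forall (g : G) (S : set G),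
     measurable (S : set (borelT (zpt G))) ->
     haar (transl g S) = haar S)
  (rep : G -> 'M[R]_d)
  (rep_hom : forall g h : G, rep (g + h) = rep g *m rep h)
  (rep_unit : rep 0 = 1%:M)
  (rep_unitary : forall g : G, rep g *m (rep g)^T = 1%:M)
  (rep_continuous : forall I : 'cV[R]_d, continuous (fun g : G => rep g *m I))
  (G0 : set G) (G0_measurable : measurable (G0 : set (borelT (zpt G))))
  (V_pos : (0 < haar G0)%E) :
  (forall I I' : 'cV[R]_d, orbit_rel rep I I' ->
     exists gt : G, forall (g : G) (A : set 'cV[R]_d),
       measurable (A : set (borelT 'cV[R]_d)) ->
       Pbar haar rep G0 I' g A = Pact gt (Pbar haar rep G0 I) g A)
  /\
  (forall (I : 'cV[R]_d) (gt : G) (g : G) (A : set 'cV[R]_d),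
       measurable (A : set (borelT 'cV[R]_d)) ->
       Pbar haar rep G0 (gact rep gt I) g A = Pbar haar rep G0 I (g + gt) A).
Proof.
have mZ : forall (J : 'cV[R]_d) (g : G) (A : set 'cV[R]_d),
    measurable (A : set (borelT 'cV[R]_d)) ->
    measurable (Zpre rep G0 J g A : set (borelT (zpt G))).
  move=> J g A mA.
  have -> : Zpre rep G0 J g A =
      ((fun h : zpt G => h - g) @^-1` G0) `&` ((fun h : zpt G => rep h *m J) @^-1` A).
    apply/seteqP; split => h /=.
      by move=> [[g' G0g' <-] Ah]; split => //; rewrite addrC addKr.
    move=> [G0h Ah]; split => //; exists (h - g) => //.
    by rewrite addrC subrK.
  apply: measurableI.
    exact: (@cont_borel_measurable (zpt G) (zpt G) _ (@subc_continuous G g)).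
  exact: (@cont_borel_measurable (zpt G) _ _ (rep_continuous J)).
have part2 : forall (I : 'cV[R]_d) (gt : G) (g : G) (A : set 'cV[R]_d),
       measurable (A : set (borelT 'cV[R]_d)) ->
       Pbar haar rep G0 (gact rep gt I) g A = Pbar haar rep G0 I (g + gt) A.
  move=> I gt g A mA; rewrite /Pbar /rho.
  congr (fine _ / _).
  have -> : Zpre rep G0 I (g + gt) A = transl gt (Zpre rep G0 (gact rep gt I) g A).
    apply/seteqP; split => k /=.
      move=> [[g' G0g' <-] Ak]; exists (g + g').
        split; first by exists g'.
        by rewrite /gact mulmxA -rep_hom addrAC.
      by rewrite addrCA addrA.
    move=> [h [[g' G0g' <-] Ah] <-]; split.
      by exists g' => //; rewrite addrAC addrC addrA.
    by move: Ah; rewrite /gact mulmxA -rep_hom addrC.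
  by rewrite haar_invariant //; exact: mZ.
split => //.
move=> I I' [g <-]; exists g => g' A mA.
by rewrite part2 // /Pact addrC.
Qed.
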